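(* Let $R$ be an $h$-local domain. For each maximal ideal $\mathfrak m$ of $R$, let $X(\mathfrak m)$ be a finitely generated torsion-free $R_\mathfrak m$-module of rank $n$ (the same $n$ for all $\mathfrak m$). The following are equivalent: (i) there is a finitely generated torsion-free $R$-module $N$ of rank $n$ with $N_\mathfrak m\cong X(\mathfrak m)$ for every maximal ideal $\mathfrak m$ of $R$; (ii) $X(\mathfrak m)$ is a free $R_\mathfrak m$-module for all but finitely many maximal ideals $\mathfrak m$ of $R$.
   Context: A commutative domain is $h$-local if every non-zero element lies in only finitely many maximal ideals and every non-zero prime ideal is contained in a unique maximal ideal. A module is torsion-free if $M\to M\otimes Q$ is injective ($Q$ the field of fractions); its rank is $\dim_Q(M\otimes Q)$. *)

(* Defs.v *)
From HB Require Import structures.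
From mathcomp Require Import all_boot all_order all_algebra.
From mathcomp Require Import boolp.
From mathcomp Require Import ring fraction.
From Stdlib Require List.
Set Implicit Arguments. Unset Strict Implicit. Unset Printing Implicit Defensive.
Import GRing.Theory.
Local Open Scope ring_scope.

Notation "x %:F" := (@FracField.tofrac _ x).

Definition is_ideal (R : comNzRingType) (I : R -> Prop) : Prop :=
  [/\ I 0, (forall x y, I x -> I y -> I (x + y)) & (forall r x, I x -> I (r * x))].

Definition is_proper_ideal (R : comNzRingType) (I : R -> Prop) : Prop :=
  is_ideal I /\ ~ I 1.

Definition is_maximal_ideal (R : comNzRingType) (I : R -> Prop) : Prop :=
  is_proper_ideal I /\
  forall J : R -> Prop, is_ideal J -> (forall x, I x -> J x) ->
    (forall x, J x -> I x) \/ J 1.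

Definition is_prime_ideal (R : comNzRingType) (P : R -> Prop) : Prop :=
  is_proper_ideal P /\ forall a b, P (a * b) -> P a \/ P b.

Definition same_ideal (R : comNzRingType) (I J : R -> Prop) : Prop :=
  forall x, I x <-> J x.

Record maxideal (R : comNzRingType) := MaxIdeal {
  mid :> R -> Prop;
  mid_max : is_maximal_ideal mid }.

Lemma maxideal_prime (R : comNzRingType) (m : maxideal R) : is_prime_ideal m.
Proof.
case: m => m [[[m0 mD mM] m1] mmax] /=; split => //.
move=> a b mab; case: (pselect (m a)) => ma; first by left.
right.
pose J := fun x => exists y r, m y /\ x = y + r * a.
have Jid : is_ideal J.
  split.
  - by exists 0, 0; split => //; rewrite mul0r addr0.
  - move=> x z [y1 [r1 [my1 ->]]] [y2 [r2 [my2 ->]]].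
    exists (y1 + y2), (r1 + r2); split; first exact: mD.
    by rewrite mulrDl addrACA.
  - move=> r x [y [r' [my ->]]]; exists (r * y), (r * r'); split; first exact: mM.
    by rewrite mulrDr mulrA.
have sub : forall x, m x -> J x by move=> x mx; exists x, 0; rewrite mul0r addr0.
case: (mmax J Jid sub) => [JI|J1].
  by exfalso; apply: ma; apply: JI; exists 0, 1; rewrite add0r mul1r.
case: J1 => y [r [my e]].
have -> : b = b * y + r * (a * b).
  by rewrite -[b in LHS]mulr1 e; ring.
by apply: mD; apply: mM.
Qed.

Definition loc_pred (R : idomainType) (m : maxideal R) : {pred {fraction R}} :=
  fun x => `[< exists a s, ~ m s /\ x = a%:F / s%:F >].

Lemma loc_subring_closed (R : idomainType) (m : maxideal R) :
  subring_closed (loc_pred m).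
Proof.
have [[[m0 _ _] m1] mP] := maxideal_prime m.
have nz : forall s : R, ~ m s -> (s%:F : {fraction R}) != 0.
  by move=> s ms; rewrite tofrac_eq0; apply/eqP => s0; apply: ms; rewrite s0.
have ms2 : forall s t, ~ m s -> ~ m t -> ~ m (s * t).
  by move=> s t ms mt /mP [].
split.
- apply/asboolP; exists 1, 1; split => //; by rewrite divr1.
- move=> x y /asboolP [a [s [ms ->]]] /asboolP [b [t [mt ->]]].
  apply/asboolP; exists (a * t - b * s), (s * t); split; first exact: ms2.
  rewrite -mulNr addf_div ?nz // !tofracB !tofracM mulNr.
  by rewrite [(b%:F * s%:F)]mulrC.
- move=> x y /asboolP [a [s [ms ->]]] /asboolP [b [t [mt ->]]].
  apply/asboolP; exists (a * b), (s * t); split; first exact: ms2.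
  by rewrite mulf_div !tofracM.
Qed.

HB.instance Definition _ (R : idomainType) (m : maxideal R) :=
  GRing.isSubringClosed.Build _ (loc_pred m) (loc_subring_closed m).

Definition localization (R : idomainType) (m : maxideal R) :=
  {x : {fraction R} | x \in loc_pred m}.

HB.instance Definition _ (R : idomainType) (m : maxideal R) :=
  [isSub for (@sval _ _ : localization m -> _)].
HB.instance Definition _ (R : idomainType) (m : maxideal R) :=
  [Choice of localization m by <:].
HB.instance Definition _ (R : idomainType) (m : maxideal R) :=
  [SubChoice_isSubComNzRing of localization m by <:].

Lemma loc_of_proof (R : idomainType) (m : maxideal R) (r : R) :
  (r%:F : {fraction R}) \in loc_pred m.
Proof.
have [[[_ _ _] m1] _] := maxideal_prime m.
by apply/asboolP; exists r, 1; split => //; rewrite tofrac1 divr1.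
Qed.

Definition loc_of (R : idomainType) (m : maxideal R) (r : R) : localization m :=
  exist _ (r%:F) (loc_of_proof m r).

Definition finitely_generated (D : comNzRingType) (M : lmodType D) : Prop :=
  exists gs : seq M, forall x : M,
    exists c : 'I_(size gs) -> D, x = \sum_(i < size gs) c i *: gs`_i.

Definition free_module (D : comNzRingType) (M : lmodType D) : Prop :=
  exists (I : Type) (b : I -> M),
    (forall x : M, exists (s : seq I) (c : I -> D), x = \sum_(i <- s) c i *: b i) /\
    (forall (s : seq I) (c : I -> D), List.NoDup s ->
        \sum_(i <- s) c i *: b i = 0 -> forall i, List.In i s -> c i = 0).

(* M is torsion-free: the map M -> M (x) Q = S^{-1} M (S = D \ {0}),
   x |-> x/1, is injective; x/1 = 0 in S^{-1}M iff d x = 0 for some d != 0. *)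
Definition torsion_free (D : comNzRingType) (M : lmodType D) : Prop :=
  forall (d : D) (x : M), d != 0 -> d *: x = 0 -> x = 0.

(* M has rank n, i.e. dim_Q (M (x) Q) = n.  A Q-basis of M (x) Q = S^{-1}M
   can always be taken of the form v_1/1, ..., v_n/1 (rescaling by units);
   v_i/1 are Q-independent iff the v_i are D-independent in M, and they
   span S^{-1}M iff every x in M has a nonzero multiple in the D-span. *)
Definition has_rank (D : comNzRingType) (M : lmodType D) (n : nat) : Prop :=
  exists v : 'I_n -> M,
    (forall c : 'I_n -> D, \sum_(i < n) c i *: v i = 0 -> forall i, c i = 0) /\
    (forall x : M, exists (d : D) (c : 'I_n -> D),
        d != 0 /\ d *: x = \sum_(i < n) c i *: v i).

(* N_m ~= X as R_m-modules, for an R-module N and an R_m-module X.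
   Such an isomorphism is the same as an R-linear map f : N -> X (X viewed
   as an R-module via R -> R_m) whose induced R_m-linear map
   N_m -> X, x/s |-> s^{-1} f(x), is bijective: injective iff
   ker f = {x | s x = 0 for some s not in m}, surjective iff every y in X
   is of the form s^{-1} f(x). *)
Definition localization_iso (R : idomainType) (m : maxideal R)
    (N : lmodType R) (X : lmodType (localization m)) : Prop :=
  exists f : N -> X,
    [/\ (forall x y, f (x + y) = f x + f y),
        (forall (r : R) x, f (r *: x) = loc_of m r *: f x),
        (forall x, f x = 0 <-> exists s : R, ~ m s /\ s *: x = 0) &
        (forall y : X, exists (x : N) (s : R), ~ m s /\ loc_of m s *: y = f x)].

Definition h_local (R : idomainType) : Prop :=
  (forall x : R, x != 0 ->
     exists L : seq (R -> Prop), forall m : maxideal R, m x ->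
       exists2 P, List.In P L & same_ideal m P) /\
  (forall P : R -> Prop, is_prime_ideal P -> (exists x, x != 0 /\ P x) ->
     (exists m : maxideal R, forall x, P x -> m x) /\
     (forall m1 m2 : maxideal R, (forall x, P x -> m1 x) -> (forall x, P x -> m2 x) ->
        same_ideal m1 m2)).
Arguments localization_iso {R} m N X.

(* Main.v *)
Require Import Defs.
From HB Require Import structures.
From mathcomp Require Import all_boot all_order all_algebra.
From Stdlib Require List.
From mathcomp Require Import boolp.
From mathcomp Require Import ring fraction generic_quotient.
From mathcomp Require classical_sets.
Set Implicit Arguments. Unset Strict Implicit. Unset Printing Implicit Defensive.
Import GRing.Theory.
Local Open Scope ring_scope.


Section FracRepr.
Local Open Scope quotient_scope.
Lemma frac_repr (R : idomainType) (x : {fraction R}) :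
  exists a b : R, b != 0 /\ x = a%:F / b%:F.
Proof.
elim/quotW: x => r.
have hd := denom_ratioP r.
exists (r.1), (r.2); split => //.
apply: (canRL (mulfK _)); first by rewrite tofrac_eq0.
rewrite /FracField.tofrac -!lock.
have E := @FracField.pi_mul R r (Ratio r.2 1).
apply: etrans (esym E) _.
apply/eqmodP; rewrite /= FracField.equivfE /FracField.mulf.
rewrite !numden_Ratio ?mulr1 ?mul1r ?oner_neq0 //.
by rewrite mulrC.
Qed.

End FracRepr.

Section Basics.
Variable R : idomainType.
Implicit Types m : maxideal R.

Lemma maxideal_eq m1 m2 : same_ideal m1 m2 -> m1 = m2.
Proof.
case: m1 m2 => [m1 h1] [m2 h2] /= e.
have E : m1 = m2 by apply: funext => x; apply: propext; exact: e.
subst m2; congr MaxIdeal; exact: Prop_irrelevance.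
Qed.

Lemma mid0 m : m 0.
Proof. by have [[[]]] := maxideal_prime m. Qed.
Lemma mid1 m : ~ m 1.
Proof. by have [[]] := maxideal_prime m. Qed.
Lemma midD m x y : m x -> m y -> m (x + y).
Proof. move=> a b; have [[[_ h _] _] _] := maxideal_prime m. exact: h. Qed.
Lemma midM m r x : m x -> m (r * x).
Proof. move=> a; have [[[_ _ h] _] _] := maxideal_prime m. exact: h. Qed.
Lemma midMr m r x : m x -> m (x * r).
Proof. by rewrite mulrC; apply: midM. Qed.
Lemma midN m x : m x -> m (- x).
Proof. by move=> h; rewrite -mulN1r; apply: midM. Qed.
Lemma mid_mul_not m s t : ~ m s -> ~ m t -> ~ m (s * t).
Proof. by move=> hs ht; have [_ h] := maxideal_prime m; case/h. Qed.
Lemma mid_neq0 m s : ~ m s -> s != 0.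
Proof. by move=> h; apply/eqP => s0; apply: h; rewrite s0; apply: mid0. Qed.

Lemma mid_prod m (I : Type) (r : seq I) (P : pred I) (F : I -> R) :
  (forall i, P i -> ~ m (F i)) -> ~ m (\prod_(i <- r | P i) F i).
Proof.
move=> h; apply: (big_ind (fun x => ~ m x)) => //; first exact: mid1.
by move=> x y; apply: mid_mul_not.
Qed.

Lemma ideal_adjoin (P : R -> Prop) a : is_ideal P ->
  is_ideal (fun x => exists p r, P p /\ x = p + r * a).
Proof.
move=> [P0 PD PM]; split.
- by exists 0, 0; rewrite mul0r addr0.
- move=> x z [y1 [r1 [my1 ->]]] [y2 [r2 [my2 ->]]].
  exists (y1 + y2), (r1 + r2); split; first exact: PD.
  by rewrite mulrDl addrACA.
- move=> r x [y [r' [my ->]]]; exists (r * y), (r * r'); split; first exact: PM.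
  by rewrite mulrDr mulrA.
Qed.

Lemma prime_avoid (I S : R -> Prop) : is_ideal I -> S 1 ->
  (forall a b, S a -> S b -> S (a * b)) -> (forall x, I x -> ~ S x) ->
  exists P, [/\ is_prime_ideal P, (forall x, I x -> P x) & (forall x, P x -> ~ S x)].
Proof.
move=> Iid S1 SM IS.
pose T := {J : R -> Prop | [/\ is_ideal J, (forall x, I x -> J x) & (forall x, J x -> ~ S x)]}.
pose t0 : T := exist _ I (And3 Iid (fun x h => h) IS).
pose rl := fun A B : T => `[< forall x, sval A x -> sval B x >].
have [|||P Pmax] := @classical_sets.ZL_preorder T t0 rl.
- by move=> t; apply/asboolP.
- by move=> a b c /asboolP h1 /asboolP h2; apply/asboolP => x /h1/h2.
- move=> A Atot.
  case: (pselect (exists J, A J)) => [[J0 AJ0]|nA]; last first.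
    by exists t0 => s As; exfalso; apply: nA; exists s.
  pose U := fun x => exists J, A J /\ sval J x.
  have Uid : is_ideal U.
    split.
    + exists J0; split => //; by case: (svalP J0) => [[]].
    + move=> x y [J1 [AJ1 h1]] [J2 [AJ2 h2]].
      case: (Atot _ _ AJ1 AJ2) => /asboolP sub.
      * exists J2; split => //; case: (svalP J2) => [[_ hD _] _ _]; apply: hD => //; exact: sub.
      * exists J1; split => //; case: (svalP J1) => [[_ hD _] _ _]; apply: hD => //; exact: sub.
    + move=> r x [J [AJ h]]; exists J; split => //; case: (svalP J) => [[_ _ hM] _ _]; exact: hM.
  have UI : forall x, I x -> U x.
    by move=> x Ix; exists J0; split => //; case: (svalP J0) => _ h _; apply: h.
  have US : forall x, U x -> ~ S x.
    by move=> x [J [AJ h]]; case: (svalP J) => _ _ h'; apply: h'.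
  exists (exist _ U (And3 Uid UI US)) => s As; apply/asboolP => x h /=.
  by exists s.
- case: P Pmax => P [Pid PI PS] Pmax.
  exists P; split => //; split.
    by split => //; move=> P1; apply: (PS 1).
  move=> a b Pab; case: (pselect (P a)) => [|Pa]; first by left.
  case: (pselect (P b)) => [|Pb]; first by right.
  exfalso.
  have meet : forall c, ~ P c -> exists p r, P p /\ S (p + r * c).
    move=> c Pc; apply: contrapT => hn.
    pose Jc := fun x => exists p r, P p /\ x = p + r * c.
    have Jid := ideal_adjoin c Pid.
    have JI : forall x, I x -> Jc x by move=> x Ix; exists x, 0; rewrite mul0r addr0; split => //; exact: (PI _ Ix).
    have JS : forall x, Jc x -> ~ S x.
      by move=> x [p [r [Pp ->]]] Sx; apply: hn; exists p, r.
    have := Pmax (exist _ Jc (And3 Jid JI JS)).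
    have -> : rl (exist _ P (And3 Pid PI PS)) (exist _ Jc (And3 Jid JI JS)).
      by apply/asboolP => x Px /=; exists x, 0; rewrite mul0r addr0.
    move=> /(_ isT) /asboolP /= h; apply: Pc; apply: h.
    by exists 0, 1; rewrite add0r mul1r; split => //; case: (Pid).
  have [p1 [r1 [Pp1 S1']]] := meet a Pa.
  have [p2 [r2 [Pp2 S2']]] := meet b Pb.
  apply: (PS _ _ (SM _ _ S1' S2')).
  have [P0 PD PM] := Pid.
  have -> : (p1 + r1 * a) * (p2 + r2 * b) =
    (p1 * (p2 + r2 * b) + (r1 * a) * p2) + (r1 * r2) * (a * b) by ring.
  apply: (PD); last exact: (PM _ _ Pab).
  apply: (PD); first by rewrite mulrC; apply: (PM _ _ Pp1).
  exact: (PM _ _ Pp2).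
Qed.

End Basics.


Section HLocal.
Variable R : idomainType.
Implicit Types m : maxideal R.

Lemma preds_to_max (L : seq (R -> Prop)) : exists ms : seq (maxideal R),
  forall m, (exists2 P, List.In P L & same_ideal m P) -> List.In m ms.
Proof.
elim: L => [|P L [ms hms]].
  by exists [::] => m [P []].
case: (pselect (exists m0 : maxideal R, same_ideal m0 P)) => [[m0 h0]|nm].
  exists (m0 :: ms) => m [Q [<-|QL] hQ].
    by left; apply: maxideal_eq => x; split => h; [apply/hQ; apply/h0 | apply/h0; apply/hQ].
  by right; apply: hms; exists Q.
exists ms => m [Q [<-|QL] hQ].
  by exfalso; apply: nm; exists m.
by apply: hms; exists Q.
Qed.

Hypothesis hR : h_local R.

Lemma hl_fin (t : R) : t != 0 -> exists ms : seq (maxideal R),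
  forall m, m t -> List.In m ms.
Proof.
move=> t0; have [L hL] := hR.1 t t0.
have [ms hms] := preds_to_max L.
by exists ms => m /hL [P h1 h2]; apply: hms; exists P.
Qed.

Lemma hl_indep m m' (t : R) : m <> m' -> t != 0 ->
  exists s u r, [/\ ~ m s, ~ m' u & s * u = t * r].
Proof.
move=> mm' t0; apply: contrapT => hn.
pose I := fun x : R => exists r, x = t * r.
pose S := fun x : R => exists s u, [/\ ~ m s, ~ m' u & x = s * u].
have Iid : is_ideal I.
  split; first by exists 0; rewrite mulr0.
  - by move=> x y [r1 ->] [r2 ->]; exists (r1 + r2); rewrite mulrDr.
  - by move=> r x [r1 ->]; exists (r * r1); rewrite mulrCA.
have S1 : S 1 by exists 1, 1; split => //; [exact: mid1 | exact: mid1 | rewrite mulr1].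
have SM : forall a b, S a -> S b -> S (a * b).
  move=> a b [s1 [u1 [h1 h2 ->]]] [s2 [u2 [h3 h4 ->]]].
  exists (s1 * s2), (u1 * u2); split; try exact: mid_mul_not.
  by rewrite mulrACA.
have IS : forall x, I x -> ~ S x.
  by move=> x [r ->] [s [u [h1 h2 e]]]; apply: hn; exists s, u, r.
have [P [Pp PI PS]] := prime_avoid Iid S1 SM IS.
have Pm : forall x, P x -> m x.
  move=> x Px; apply: contrapT => mx; apply: (PS x Px).
  by exists x, 1; split => //; [exact: mid1 | rewrite mulr1].
have Pm' : forall x, P x -> m' x.
  move=> x Px; apply: contrapT => mx; apply: (PS x Px).
  by exists 1, x; split => //; [exact: mid1 | rewrite mul1r].
have Pnz : exists x, x != 0 /\ P x by exists t; split => //; apply: PI; exists 1; rewrite mulr1.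
have [_ uniq] := hR.2 P Pp Pnz.
by apply: mm'; apply: maxideal_eq; apply: uniq.
Qed.

Lemma hl_unit (J : R -> Prop) : is_ideal J -> (exists x, x != 0 /\ J x) ->
  (forall m, exists s, J s /\ ~ m s) -> J 1.
Proof.
move=> Jid Jnz hJ; apply: contrapT => J1.
pose S := fun x : R => x = 1.
have S1 : S 1 by [].
have SM : forall a b, S a -> S b -> S (a * b) by move=> a b -> ->; rewrite mulr1.
have IS : forall x, J x -> ~ S x by move=> x Jx Sx; apply: J1; rewrite -Sx.
have [P [Pp PI PS]] := prime_avoid Jid S1 SM IS.
have Pnz : exists x, x != 0 /\ P x.
  by case: Jnz => x [x0 Jx]; exists x; split => //; apply: PI.
have [[m hm] _] := hR.2 P Pp Pnz.
have [s [Js ms]] := hJ m.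
by apply: ms; apply: hm; apply: PI.
Qed.

End HLocal.


Section Loc.
Variable R : idomainType.
Variable m : maxideal R.
Local Notation D := (localization m).
Local Notation K := {fraction R}.
Local Notation loc := (loc_of m).

Lemma lvalD (x y : D) : val (x + y) = val x + val y. Proof. by []. Qed.
Lemma lvalM (x y : D) : val (x * y) = val x * val y. Proof. by []. Qed.
Lemma lvalN (x : D) : val (- x) = - val x. Proof. by []. Qed.
Lemma lval0 : val (0 : D) = 0. Proof. by []. Qed.
Lemma lval1 : val (1 : D) = 1. Proof. by []. Qed.
Lemma val_loc r : val (loc r) = r%:F. Proof. by []. Qed.

Lemma locD a b : loc (a + b) = loc a + loc b.
Proof. by apply: val_inj; rewrite lvalD !val_loc tofracD. Qed.
Lemma locM a b : loc (a * b) = loc a * loc b.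
Proof. by apply: val_inj; rewrite lvalM !val_loc tofracM. Qed.
Lemma locN a : loc (- a) = - loc a.
Proof. by apply: val_inj; rewrite lvalN !val_loc tofracN. Qed.
Lemma loc0 : loc 0 = 0.
Proof. by apply: val_inj; rewrite lval0 !val_loc tofrac0. Qed.
Lemma loc1 : loc 1 = 1.
Proof. by apply: val_inj; rewrite lval1 !val_loc tofrac1. Qed.

Lemma lval_eq0 (x : D) : (val x == 0) = (x == 0).
Proof. by rewrite -lval0 (inj_eq val_inj). Qed.

Lemma loc_mulIf (d x : D) : d != 0 -> d * x = 0 -> x = 0.
Proof.
move=> d0 /(congr1 val); rewrite lvalM lval0 => /eqP; rewrite mulf_eq0.
by rewrite !lval_eq0 (negbTE d0) => /eqP.
Qed.

Lemma loc_predP (x : K) : x \in loc_pred m <-> exists a s, ~ m s /\ x = a%:F / s%:F.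
Proof. by split => [/asboolP|h]; last apply/asboolP. Qed.

Lemma loc_repr (x : D) : exists a s, ~ m s /\ loc s * x = loc a.
Proof.
case: x => v hv; have [a [s [ms e]]] := (loc_predP v).1 hv.
exists a, s; split => //; apply: val_inj; rewrite lvalM !val_loc /= e.
by rewrite mulrC mulfVK // tofrac_eq0 (mid_neq0 ms).
Qed.

Lemma loc_inv s : ~ m s -> exists w : D, w * loc s = 1.
Proof.
move=> ms.
have hv : (1%:F / s%:F : K) \in loc_pred m.
  by apply/loc_predP; exists 1, s.
exists (exist (fun x => x \in loc_pred m) _ hv); apply: val_inj; rewrite lvalM val_loc lval1 /=.
by rewrite tofrac1 mul1r mulVf // tofrac_eq0 (mid_neq0 ms).
Qed.

Lemma loc_unit s (x y : D) : ~ m s -> loc s * x = loc s * y -> x = y.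
Proof.
move=> ms e; have [w hw] := loc_inv ms.
by rewrite -[x]mul1r -[y]mul1r -hw -!mulrA e.
Qed.

Lemma loc_common k (c : 'I_k -> D) : exists s (a : 'I_k -> R),
  ~ m s /\ forall i, loc s * c i = loc (a i).
Proof.
have h : forall i, exists p : R * R, ~ m p.2 /\ loc p.2 * c i = loc p.1.
  by move=> i; have [a [s [ms e]]] := loc_repr (c i); exists (a, s).
pose p := fun i => projT1 (cid (h i)).
have hp : forall i, ~ m (p i).2 /\ loc (p i).2 * c i = loc (p i).1.
  by move=> i; rewrite /p; case: cid.
exists (\prod_i (p i).2), (fun i => (p i).1 * \prod_(j | j != i) (p j).2).
split; first by apply: mid_prod => i _; case: (hp i).
by move=> i; rewrite (bigD1 i) //= !locM mulrAC (hp i).2.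
Qed.

End Loc.

Lemma frac_common (R : idomainType) k (c : 'I_k -> {fraction R}) :
  exists t (a : 'I_k -> R), t != 0 /\ forall i, t%:F * c i = (a i)%:F.
Proof.
have h : forall i, exists p : R * R, p.2 != 0 /\ (p.2)%:F * c i = (p.1)%:F.
  move=> i; have [a [s [s0 e]]] := frac_repr (c i); exists (a, s); split => //=.
  by rewrite e mulrC mulfVK // tofrac_eq0.
pose p := fun i => projT1 (cid (h i)).
have hp : forall i, (p i).2 != 0 /\ (p i).2%:F * c i = (p i).1%:F.
  by move=> i; rewrite /p; case: cid.
exists (\prod_i (p i).2), (fun i => (p i).1 * \prod_(j | j != i) (p j).2).
split.
  by rewrite prodf_seq_neq0; apply/allP => i _; apply/implyP => _; case: (hp i).
by move=> i; rewrite (bigD1 i) //= !tofracM mulrAC (hp i).2.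
Qed.


Lemma inP' (T : eqType) (x : T) (s : seq T) : List.In x s <-> x \in s.
Proof.
elim: s => //= y s IH; rewrite in_cons; split.
  by case=> [->|/IH ->]; rewrite ?eqxx ?orbT.
by case/orP => [/eqP ->|/IH]; [left|right].
Qed.

Lemma nodupP (T : eqType) (s : seq T) : List.NoDup s <-> uniq s.
Proof.
elim: s => [|y s IH]; first by split => // _; constructor.
rewrite List.NoDup_cons_iff /=; split.
  by case=> h1 /IH h2; rewrite h2 andbT; apply/negP => /inP'.
by case/andP => /negP h1 /IH h2; split => // /inP'.
Qed.

Section AddF.
Variables (U V : zmodType) (f : U -> V).
Hypothesis fadd : forall x y, f (x + y) = f x + f y.
Lemma add_f0 : f 0 = 0.
Proof. by apply: (@addrI _ (f 0)); rewrite -fadd !addr0. Qed.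
Lemma add_fsum (I : Type) (r : seq I) (P : pred I) (F : I -> U) :
  f (\sum_(i <- r | P i) F i) = \sum_(i <- r | P i) f (F i).
Proof. exact: (big_morph f fadd add_f0). Qed.
Lemma add_fN x : f (- x) = - f x.
Proof. by apply: (@addrI _ (f x)); rewrite -fadd !subrr add_f0. Qed.
End AddF.

Lemma dir12 (R : idomainType) (hR : h_local R) n (N : lmodType R)
  (X : forall m : maxideal R, lmodType (localization m)) :
  finitely_generated N -> torsion_free N -> has_rank N n ->
  (forall m, localization_iso m N (X m)) ->
  exists L : seq (R -> Prop), forall m : maxideal R,
    (forall P, List.In P L -> ~ same_ideal m P) -> free_module (X m).
Proof.
move=> [gs hgs] tfN [v [vind vspan]] iso.
pose spanv := fun y : N => exists c : 'I_n -> R, y = \sum_(i < n) c i *: v i.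
have sp0 : spanv 0.
  by exists (fun _ => 0); rewrite big1 // => i _; rewrite scale0r.
have spD : forall y z, spanv y -> spanv z -> spanv (y + z).
  move=> y z [c1 ->] [c2 ->]; exists (fun i => c1 i + c2 i).
  by rewrite -big_split /=; apply: eq_bigr => i _; rewrite scalerDl.
have spZ : forall r y, spanv y -> spanv (r *: y).
  move=> r y [c ->]; exists (fun i => r * c i).
  by rewrite scaler_sumr; apply: eq_bigr => i _; rewrite scalerA.
have hd : forall k : 'I_(size gs), exists d, d != 0 /\ spanv (d *: gs`_k).
  by move=> k; have [d [c [d0 e]]] := vspan gs`_k; exists d; split => //; exists c.
pose d := fun k => projT1 (cid (hd k)).
have hdk : forall k, d k != 0 /\ spanv (d k *: gs`_k) by move=> k; rewrite /d; case: cid.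
pose D := \prod_k d k.
have D0 : D != 0.
  by rewrite prodf_seq_neq0; apply/allP => k _; apply/implyP => _; case: (hdk k).
have Dsp : forall x, spanv (D *: x).
  move=> x; have [c ->] := hgs x; rewrite scaler_sumr.
  apply: (big_ind spanv) => // k _.
  rewrite scalerA mulrC -scalerA; apply: (spZ).
  rewrite /D (bigD1 k) //= mulrC -scalerA; apply: (spZ); exact: (hdk k).2.
have [L hL] := hR.1 D D0.
exists L => m hm.
have mD : ~ m D by move=> /hL [P PL PS]; exact: (hm P PL PS).
have [f [fadd fZ fker fsurj]] := iso m.
exists 'I_n, (fun i => f (v i)); split.
- move=> y; have [x [s [ms e]]] := fsurj y.
  have [c ec] := Dsp x.
  have [w hw] := loc_inv (mid_mul_not mD ms).
  exists (index_enum 'I_n), (fun i => w * loc_of m (c i)).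
  have e2 : loc_of m (D * s) *: y = \sum_(i < n) loc_of m (c i) *: f (v i).
    rewrite locM -scalerA e -fZ ec (add_fsum fadd).
    by apply: eq_bigr => i _; rewrite fZ.
  rewrite -[y]scale1r -hw -scalerA e2 scaler_sumr.
  by apply: eq_bigr => i _; rewrite scalerA.
- move=> s c nd hs i ins.
  have us : uniq s by apply/nodupP.
  pose c' := fun i => if i \in s then c i else 0.
  have e0 : \sum_(i < n) c' i *: f (v i) = 0.
    rewrite -[RHS]hs [RHS]big_uniq // [RHS]big_mkcond /=.
    by apply: eq_bigr => j _; rewrite /c'; case: (j \in s) => //; rewrite scale0r.
  have [sg [a [msg ea]]] := loc_common c'.
  have e1 : f (\sum_(i < n) a i *: v i) = 0.
    rewrite (add_fsum fadd); under eq_bigr => j _ do rewrite fZ -ea -scalerA.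
    by rewrite -scaler_sumr e0 scaler0.
  have [s' [ms' e']] := (fker _).1 e1.
  have e3 := tfN _ _ (mid_neq0 ms') e'.
  have ai := vind a e3 i.
  have : loc_of m sg * c' i = loc_of m sg * 0 by rewrite ea ai loc0 mulr0.
  move=> /(loc_unit msg); rewrite /c' (_ : i \in s) //; exact/inP'.
Qed.


Lemma free_fun (K : fieldType) k n (u : 'I_k -> 'rV[K]_n) :
  (forall q : 'I_k -> K, \sum_p q p *: u p = 0 -> forall p, q p = 0) -> (k <= n)%N.
Proof.
move=> h.
have fr : free [tuple u p | p < k].
  apply/freeP => q e; apply: h; rewrite -[RHS]e; apply: eq_bigr => p _.
  by rewrite -tnth_nth tnth_mktuple.
move: fr => /eqP; rewrite size_tuple => <-.
apply: leq_trans (dimvS (subvf _)) _; rewrite dimvf dim_matrix. by rewrite GRing.mul1r.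
Qed.

Section Iota.
Variables (R : idomainType) (m : maxideal R) (n : nat).
Local Notation D := (localization m).
Local Notation K := {fraction R}.
Variable X : lmodType D.
Hypothesis tfX : torsion_free X.
Variable v : 'I_n -> X.
Hypothesis vind : forall c : 'I_n -> D, \sum_(i < n) c i *: v i = 0 -> forall i, c i = 0.
Hypothesis vspan : forall x : X, exists (d : D) (c : 'I_n -> D),
  d != 0 /\ d *: x = \sum_(i < n) c i *: v i.

Lemma vspan2 x : exists p : D * ('I_n -> D), p.1 != 0 /\ p.1 *: x = \sum_i p.2 i *: v i.
Proof. by have [d [c h]] := vspan x; exists (d, c). Qed.
Definition idp x := projT1 (cid (vspan2 x)).
Definition idd x : D := (idp x).1.
Definition idc x : 'I_n -> D := (idp x).2.
Lemma id_spec x : idd x != 0 /\ idd x *: x = \sum_i idc x i *: v i.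
Proof. by rewrite /idd /idc /idp; case: cid. Qed.

Definition liota x : 'rV[K]_n := \row_j (val (idc x j) / val (idd x)).

Lemma liota_eq x d c : d != 0 -> d *: x = \sum_i c i *: v i ->
  liota x = \row_j (val (c j) / val d).
Proof.
move=> d0 e; have [d'0 e'] := id_spec x.
have h : forall j, idd x * c j = d * idc x j.
  have : \sum_i (idd x * c i - d * idc x i) *: v i = 0.
    under eq_bigr => i _ do rewrite scalerBl -!scalerA.
    by rewrite sumrB -!scaler_sumr -e -e' !scalerA mulrC subrr.
  move=> /vind h j; apply/eqP; rewrite -subr_eq0; apply/eqP; exact: h.
apply/rowP => j; rewrite !mxE.
have vd : val d != 0 by rewrite lval_eq0.
have vd' : val (idd x) != 0 by rewrite lval_eq0.
apply/eqP; rewrite eqr_div // -!lvalM; apply/eqP; congr val.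
by rewrite [LHS]mulrC -h [LHS]mulrC.
Qed.

Lemma liotaD x y : liota (x + y) = liota x + liota y.
Proof.
have [d1 e1] := id_spec x; have [d2 e2] := id_spec y.
rewrite (@liota_eq _ (idd x * idd y) (fun i => idd y * idc x i + idd x * idc y i)).
- apply/rowP => j; rewrite !mxE lvalM lvalD !lvalM.
  have vd1 : val (idd x) != 0 by rewrite lval_eq0.
  have vd2 : val (idd y) != 0 by rewrite lval_eq0.
  by rewrite addf_div // (mulrC (val (idc x j))) (mulrC (val (idc y j))).
- by rewrite mulf_neq0.
- rewrite scalerDr {1}mulrC -!scalerA e1 e2 !scaler_sumr -big_split /=.
  by apply: eq_bigr => i _; rewrite scalerDl !scalerA.
Qed.

Lemma liotaZ a x : liota (a *: x) = val a *: liota x.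
Proof.
have [d1 e1] := id_spec x.
rewrite (@liota_eq _ (idd x) (fun i => a * idc x i)) //.
- by apply/rowP => j; rewrite !mxE lvalM mulrA.
- rewrite scalerA mulrC -scalerA e1 scaler_sumr.
  by apply: eq_bigr => i _; rewrite scalerA.
Qed.

Lemma liota_sum (c : 'I_n -> D) : liota (\sum_i c i *: v i) = \row_j val (c j).
Proof.
rewrite (@liota_eq _ 1 c) ?oner_neq0 ?scale1r //.
by apply/rowP => j; rewrite !mxE lval1 divr1.
Qed.

Lemma liota_eq0 x : liota x = 0 -> x = 0.
Proof.
move=> h; have [d0 e] := id_spec x.
have c0 : forall j, idc x j = 0.
  move=> j; have := congr1 (fun M : 'rV[K]_n => M 0 j) h; rewrite /= !mxE.
  move=> /eqP; rewrite mulf_eq0 invr_eq0 !lval_eq0 (negbTE d0) orbF => /eqP //.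
apply: (tfX d0); rewrite e big1 // => i _; by rewrite c0 scale0r.
Qed.

Lemma liota0 : liota 0 = 0.
Proof. exact: (add_f0 liotaD). Qed.

Lemma liota_inj x y : liota x = liota y -> x = y.
Proof.
move=> h; apply/eqP; rewrite -subr_eq0; apply/eqP; apply: liota_eq0.
by rewrite liotaD (add_fN liotaD) h subrr.
Qed.

Lemma liota_sumF (I : Type) (r : seq I) (P : pred I) (F : I -> X) :
  liota (\sum_(i <- r | P i) F i) = \sum_(i <- r | P i) liota (F i).
Proof. exact: (add_fsum liotaD). Qed.

Lemma indep_le k (u : 'I_k -> X) :
  (forall c : 'I_k -> D, \sum_p c p *: u p = 0 -> forall p, c p = 0) -> (k <= n)%N.
Proof.
move=> uind; apply: (@free_fun K k n (fun p => liota (u p))) => q e p.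
have [t [a [t0 ea]]] := frac_common q.
have e2 : liota (\sum_p loc_of m (a p) *: u p) = 0.
  rewrite liota_sumF; under eq_bigr => p' _ do rewrite liotaZ val_loc -ea -scalerA.
  by rewrite -scaler_sumr e scaler0.
have := uind _ (liota_eq0 e2) p.
move=> /(congr1 val); rewrite val_loc lval0 => /eqP; rewrite tofrac_eq0 => /eqP ap.
have : t%:F * q p = 0 by rewrite ea ap tofrac0.
by move=> /eqP; rewrite mulf_eq0 tofrac_eq0 (negbTE t0) /= => /eqP.
Qed.

End Iota.


Section FreeBasis.
Variables (R : idomainType) (m : maxideal R) (n : nat).
Local Notation D := (localization m).
Variable X : lmodType D.
Hypothesis tfX : torsion_free X.
Variable v : 'I_n -> X.
Hypothesis vind : forall c : 'I_n -> D, \sum_(i < n) c i *: v i = 0 -> forall i, c i = 0.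
Hypothesis vspan : forall x : X, exists (d : D) (c : 'I_n -> D),
  d != 0 /\ d *: x = \sum_(i < n) c i *: v i.

Lemma free_rank_basis : free_module X -> exists w : 'I_n -> X,
  (forall c : 'I_n -> D, \sum_i c i *: w i = 0 -> forall i, c i = 0) /\
  (forall x, exists c : 'I_n -> D, x = \sum_i c i *: w i).
Proof.
case=> I [b [bspan bind]].
pose I' := {classic I}.
have pos : forall S : seq I', uniq S -> forall a : 'I_(size S) -> D,
    \sum_p a p *: b (tnth (in_tuple S) p) = 0 -> forall p, a p = 0.
  move=> S uS a e p.
  pose St := tnth (in_tuple S).
  have Sinj : forall p q, (St p == St q) = (p == q).
    move=> p' q; rewrite /St (tnth_nth (St p')) (tnth_nth (St p')).
    by rewrite nth_uniq // ?size_tuple.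
  pose c := fun i : I' => \sum_(q | St q == i) a q.
  have cS : forall q, c (St q) = a q.
    by move=> q; rewrite /c (big_pred1 q) // => q'; rewrite /= Sinj.
  have e2 : \sum_(i <- S) c i *: b i = 0.
    by rewrite big_tnth -[RHS]e; apply: eq_bigr => q _; rewrite cS.
  have := bind S c ((nodupP S).2 uS) e2 (St p).
  by rewrite cS; apply; apply/(@inP' I'); apply: mem_tnth.
pose P := fun k => `[< exists S : seq I', uniq S /\ size S = k >].
have P0 : exists k, P k by exists 0%N; apply/asboolP; exists [::].
have Pub : forall k, P k -> (k <= n)%N.
  move=> k /asboolP [S [uS <-]].
  apply: (indep_le tfX vind vspan (u := fun p => b (tnth (in_tuple S) p))).
  exact: pos.
case: (ex_maxnP P0 Pub) => k /asboolP [S [uS sS]] kmax.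
have allS : forall i : I', i \in S.
  move=> i; apply/negPn/negP => iS.
  have : P (size (i :: S)) by apply/asboolP; exists (i :: S); split => //=; rewrite iS.
  by move=> /kmax; rewrite /= sS ltnn.
pose w := fun p : 'I_(size S) => b (tnth (in_tuple S) p).
pose spanw := fun x : X => exists c : 'I_(size S) -> D, x = \sum_p c p *: w p.
have sp0 : spanw 0.
  by exists (fun _ => 0); rewrite big1 // => i _; rewrite scale0r.
have spD : forall y z, spanw y -> spanw z -> spanw (y + z).
  move=> y z [c1 ->] [c2 ->]; exists (fun i => c1 i + c2 i).
  by rewrite -big_split /=; apply: eq_bigr => i _; rewrite scalerDl.
have spZ : forall r y, spanw y -> spanw (r *: y).
  move=> r y [c ->]; exists (fun i => r * c i).
  by rewrite scaler_sumr; apply: eq_bigr => i _; rewrite scalerA.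
have bsp : forall i, spanw (b i).
  move=> i; have iS := allS i; rewrite -index_mem in iS.
  pose p0 := Ordinal iS.
  exists (fun p => if p == p0 then 1 else 0).
  rewrite (bigD1 p0) //= eqxx scale1r big1 ?addr0.
    by rewrite /w (tnth_nth i) /= (@nth_index I' i i S) // -index_mem.
  by move=> p /negbTE ->; rewrite scale0r.
have wspan : forall x, spanw x.
  move=> x; have [s [c ->]] := bspan x.
  apply: (big_ind spanw) => // i _; exact: (spZ _ _ (bsp i)).
have wind : forall c : 'I_(size S) -> D, \sum_p c p *: w p = 0 -> forall p, c p = 0.
  exact: pos.
have le1 : (size S <= n)%N by apply: Pub; apply/asboolP; exists S.
have wspan' : forall x : X, exists (d : D) (c : 'I_(size S) -> D),
    d != 0 /\ d *: x = \sum_(i < size S) c i *: w i.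
  by move=> x; have [c ->] := wspan x; exists 1, c; rewrite scale1r oner_neq0.
have le2 : (n <= size S)%N := indep_le tfX wind wspan' vind.
have : exists k (w : 'I_k -> X), k = n /\
  (forall c : 'I_k -> D, \sum_i c i *: w i = 0 -> forall i, c i = 0) /\
  (forall x, exists c : 'I_k -> D, x = \sum_i c i *: w i).
  by exists (size S), w; split; [apply/eqP; rewrite eqn_leq le1 le2 | split].
by move=> [k1 [w' [kn h]]]; subst k1; exists w'.
Qed.

End FreeBasis.

Set Strict Implicit.


Section Construction.
Variable R : idomainType.
Hypothesis hR : h_local R.
Variable n : nat.
Variable X : forall m : maxideal R, lmodType (localization m).
Hypothesis hX : forall m, [/\ finitely_generated (X m), torsion_free (X m) & has_rank (X m) n].
Variable E : seq (maxideal R).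
Hypothesis hE : forall m, ~ List.In m E -> free_module (X m).

Local Notation K := {fraction R}.
Local Notation V := 'rV[K]_n.

Definition rw_spec m (v : 'I_n -> X m) :=
  [/\ (forall c : 'I_n -> localization m, \sum_i c i *: v i = 0 -> forall i, c i = 0),
      (forall x, exists (d : localization m) (c : 'I_n -> localization m),
          d != 0 /\ d *: x = \sum_i c i *: v i) &
      (free_module (X m) -> forall x, exists c : 'I_n -> localization m,
          x = \sum_i c i *: v i)].
Arguments rw_spec : clear implicits.

Lemma rw_ex m : exists v, rw_spec m v.
Proof.
have [_ tf [v [vind vspan]]] := hX m.
case: (pselect (free_module (X m))) => fr.
  have [w [wind wspan]] := free_rank_basis tf vind vspan fr.
  exists w; split => // x; have [c ->] := wspan x; exists 1, c.
  by rewrite scale1r oner_neq0.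
by exists v; split => // /fr.
Qed.

Definition rw m := projT1 (cid (rw_ex m)).
Lemma rwP m : rw_spec m (rw m). Proof. by rewrite /rw; case: cid. Qed.
Definition rw_ind m := match rwP m with And3 h _ _ => h end.
Definition rw_span m := match rwP m with And3 _ h _ => h end.
Arguments rw_ind : clear implicits.
Arguments rw_span : clear implicits.
Lemma rw_free m : free_module (X m) -> forall x, exists c, x = \sum_i c i *: rw m i.
Proof. by case: (rwP m). Qed.
Lemma tfXm m : torsion_free (X m). Proof. by case: (hX m). Qed.
Arguments tfXm : clear implicits.

Definition io m : X m -> V := liota (rw_span m).
Arguments io : clear implicits.

Lemma io_D m x y : io m (x + y) = io m x + io m y.
Proof. exact: (liotaD (rw_ind m)). Qed.
Lemma io_Z m a x : io m (a *: x) = val a *: io m x.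
Proof. exact: (liotaZ (rw_ind m)). Qed.
Lemma io_inj m x y : io m x = io m y -> x = y.
Proof. exact: (liota_inj (tfXm m) (rw_ind m)). Qed.
Lemma io_sum m c : io m (\sum_i c i *: rw m i) = \row_j val (c j).
Proof. exact: (liota_sum (rw_ind m)). Qed.
Lemma io0 m : io m 0 = 0.
Proof. exact: (add_f0 (io_D m)). Qed.
Lemma io_N m x : io m (- x) = - io m x.
Proof. exact: (add_fN (io_D m)). Qed.
Lemma io_sumF m (I : Type) (r : seq I) (P : pred I) (F : I -> X m) :
  io m (\sum_(i <- r | P i) F i) = \sum_(i <- r | P i) io m (F i).
Proof. exact: (add_fsum (io_D m)). Qed.

Definition inX m (x : V) : Prop := exists y : X m, io m y = x.

Lemma inX0 m : inX m 0. Proof. by exists 0; rewrite io0. Qed.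
Lemma inXB m x y : inX m x -> inX m y -> inX m (x - y).
Proof. by move=> [a <-] [b <-]; exists (a - b); rewrite io_D io_N. Qed.
Lemma inXD m x y : inX m x -> inX m y -> inX m (x + y).
Proof. by move=> [a <-] [b <-]; exists (a + b); rewrite io_D. Qed.
Lemma inXZ m r x : inX m x -> inX m (r%:F *: x).
Proof. by move=> [a <-]; exists (loc_of m r *: a); rewrite io_Z val_loc. Qed.

Definition Npred : {pred V} := fun x => `[< forall m, inX m x >].

Lemma Npred_zmod : zmod_closed Npred.
Proof.
split; first by apply/asboolP => m; exact: inX0.
by move=> x y /asboolP hx /asboolP hy; apply/asboolP => m; apply: inXB.
Qed.
HB.instance Definition _ := GRing.isZmodClosed.Build V Npred Npred_zmod.

Definition Ntype := {x : V | x \in Npred}.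
HB.instance Definition _ := [isSub for (@sval _ _ : Ntype -> V)].
HB.instance Definition _ := [Choice of Ntype by <:].
HB.instance Definition _ := [SubChoice_isSubZmodule of Ntype by <:].

Lemma NpredZ r x : x \in Npred -> (r%:F *: x) \in Npred.
Proof. by move=> /asboolP h; apply/asboolP => m; apply: inXZ. Qed.

Definition Nscale (r : R) (x : Ntype) : Ntype := Sub (r%:F *: val x) (@NpredZ r (val x) (valP x)).

Lemma NscaleA a b x : Nscale a (Nscale b x) = Nscale (a * b) x.
Proof. by apply: val_inj; rewrite /= scalerA tofracM. Qed.
Lemma Nscale1 : left_id 1 Nscale.
Proof. by move=> x; apply: val_inj; rewrite /= tofrac1 scale1r. Qed.
Lemma NscaleDr : right_distributive Nscale +%R.
Proof. by move=> a x y; apply: val_inj; rewrite /= scalerDr. Qed.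
Lemma NscaleDl x : {morph Nscale^~ x : a b / a + b}.
Proof. by move=> a b; apply: val_inj; rewrite /= tofracD scalerDl. Qed.

HB.instance Definition _ := GRing.Zmodule_isLmodule.Build R Ntype NscaleA Nscale1 NscaleDr NscaleDl.

Lemma valNZ (r : R) (x : Ntype) : val (r *: x) = r%:F *: val x. Proof. by []. Qed.
Lemma valND (x y : Ntype) : val (x + y) = val x + val y. Proof. by []. Qed.
Lemma valN0 : val (0 : Ntype) = 0. Proof. by []. Qed.


Lemma Npred_inX m z : z \in Npred -> inX m z.
Proof. by move=> /asboolP; apply. Qed.

Lemma loc_nat m (k : nat) : (k%:R : K) \in loc_pred m.
Proof.
have -> : (k%:R : K) = (k%:R : R)%:F by rewrite tofracMn tofrac1.
exact: loc_of_proof.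
Qed.

Lemma inX_loc m (x : V) : (forall j, x 0 j \in loc_pred m) -> inX m x.
Proof.
move=> h; exists (\sum_j (Sub (x 0 j) (h j) : localization m) *: rw m j).
by rewrite io_sum; apply/rowP => j; rewrite !mxE /=; congr (x _ _); apply/val_inj; rewrite /= (ord1 _).
Qed.

Lemma N_tf : torsion_free Ntype.
Proof.
move=> d x d0 /(congr1 val); rewrite valNZ valN0 => /eqP.
rewrite scaler_eq0 tofrac_eq0 (negbTE d0) /= => /eqP h.
by apply: val_inj; exact: h.
Qed.

Lemma delta_Npred j : (delta_mx 0 j : V) \in Npred.
Proof.
apply/asboolP => m; apply: inX_loc => k; rewrite mxE; exact: loc_nat.
Qed.

Definition Nbasis j : Ntype := Sub (delta_mx 0 j) (delta_Npred j).

Lemma val_Nsum (I : Type) (r : seq I) (P : pred I) (F : I -> Ntype) :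
  val (\sum_(i <- r | P i) F i) = \sum_(i <- r | P i) val (F i).
Proof. exact: (big_morph val valND valN0). Qed.

Lemma sum_Nbasis (a : 'I_n -> R) : val (\sum_j a j *: Nbasis j) = \row_j (a j)%:F.
Proof.
rewrite val_Nsum [RHS]row_sum_delta; apply: eq_bigr => j _.
by rewrite valNZ /= mxE.
Qed.

Lemma N_denom (x : Ntype) : exists t (a : 'I_n -> R),
  t != 0 /\ t *: x = \sum_j a j *: Nbasis j.
Proof.
have [t [a [t0 ea]]] := frac_common (fun j => val x 0 j).
exists t, a; split => //; apply: val_inj; rewrite sum_Nbasis valNZ.
by apply/rowP => j; rewrite !mxE ea.
Qed.

Lemma N_rank : has_rank Ntype n.
Proof.
exists Nbasis; split; last first.
  move=> x; have [t [a [t0 e]]] := N_denom x; exists t, a; split => //.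
move=> c /(congr1 val); rewrite sum_Nbasis valN0 => h i.
have := congr1 (fun M : V => M 0 i) h; rewrite !mxE => /eqP.
by rewrite tofrac_eq0 => /eqP.
Qed.

Lemma list_mult (Q : maxideal R -> R -> Prop) (ms : seq (maxideal R)) m :
  (forall m' s r, Q m' s -> Q m' (r * s)) ->
  (forall m', List.In m' ms -> m' <> m -> exists s, ~ m s /\ Q m' s) ->
  exists s, ~ m s /\ forall m', List.In m' ms -> m' <> m -> Q m' s.
Proof.
move=> Qm; elim: ms => [|m0 ms IH] h.
  by exists 1; split => //; exact: mid1.
have [s1 [ms1 h1]] := IH (fun m' i ne => h m' (or_intror i) ne).
case: (pselect (m0 = m)) => [e|ne].
  exists s1; split => // m' [<-|i] ne'; [by [] | exact: h1].
have [s0 [ms0 h0]] := h m0 (or_introl erefl) ne.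
exists (s0 * s1); split; first exact: mid_mul_not.
move=> m' [<-|i] ne'.
  by rewrite mulrC; apply: Qm.
by apply: Qm; apply: h1.
Qed.

Lemma KEY m (y : X m) : exists s, ~ m s /\ (s%:F *: io m y) \in Npred.
Proof.
set z := io m y.
have [t [a [t0 ea]]] := frac_common (fun j => z 0 j).
have [mT hT] := hl_fin hR t0.
pose Q := fun m' s => inX m' (s%:F *: z).
have Qmul : forall m' s r, Q m' s -> Q m' (r * s).
  by move=> m' s r h; rewrite /Q tofracM -scalerA; apply: inXZ.
have t0F : (t%:F : K) != 0 by rewrite tofrac_eq0.
have [s [ms hs]] : exists s, ~ m s /\ forall m', List.In m' mT -> m' <> m -> Q m' s.
  apply: list_mult => // m' _ ne.
  have [s' [u [r [ms' mu e]]]] := hl_indep hR (fun h => ne (esym h)) t0.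
  exists s'; split => //; apply: inX_loc => j; rewrite mxE.
  apply/loc_predP; exists (r * a j), u; split => //.
  have u0 : (u%:F : K) != 0 by rewrite tofrac_eq0 (mid_neq0 mu).
  apply: (mulIf u0); rewrite mulfVK // tofracM -ea.
  by rewrite mulrAC -tofracM e tofracM [t%:F * _]mulrC mulrA.
exists s; split => //; apply/asboolP => m'.
case: (pselect (m' = m)) => [->|ne].
  by apply: inXZ; exists y.
case: (pselect (List.In m' mT)) => [i|ni]; first exact: hs.
apply: inX_loc => j; rewrite mxE; apply/loc_predP.
exists (s * a j), t; split; first by move=> /hT.
by rewrite tofracM -ea [t%:F * _]mulrC mulrA mulfK.
Qed.

Definition fN m (x : Ntype) : X m := projT1 (cid (@Npred_inX m (val x) (valP x))).
Lemma fN_spec m x : io m (fN m x) = val x.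
Proof. by rewrite /fN; case: cid. Qed.

Lemma N_iso m : localization_iso m Ntype (X m).
Proof.
exists (fN m); split.
- by move=> x y; apply: (@io_inj m); rewrite io_D !fN_spec valND.
- by move=> r x; apply: (@io_inj m); rewrite io_Z !fN_spec valNZ val_loc.
- move=> x; split.
    move=> h; exists 1; split; first exact: mid1.
    rewrite scale1r; apply: val_inj; rewrite valN0 -(fN_spec m) h; exact: io0.
  move=> [s [ms e]]; have x0 := N_tf (mid_neq0 ms) e.
  apply: (@io_inj m); rewrite fN_spec x0 io0 //.
- move=> y; have [s [ms h]] := KEY m y.
  exists (Sub (s%:F *: io m y) h : Ntype), s; split => //.
  by apply: (@io_inj m); rewrite fN_spec io_Z val_loc SubK.
Qed.

Definition gsX m : seq (X m) := projT1 (cid (match hX m with And3 h _ _ => h end)).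
Lemma gsX_spec m (x : X m) :
  exists c : 'I_(size (gsX m)) -> localization m, x = \sum_i c i *: (gsX m)`_i.
Proof. rewrite /gsX; move: x; case: (hX m) => h _ _ /=; by case: cid. Qed.

Definition ksig (m : maxideal R) (y : X m) := cid (KEY m y).
Definition ks (m : maxideal R) (y : X m) : R := sval (ksig m y).
Lemma ks_not (m : maxideal R) (y : X m) : ~ m (ks m y). Proof. by rewrite /ks; case: (ksig m y) => s []. Qed.
Definition zz (m : maxideal R) (y : X m) : Ntype := Sub ((ks m y)%:F *: io m y) (proj2 (svalP (ksig m y))).
Lemma val_zz (m : maxideal R) (y : X m) : val (zz m y) = (ks m y)%:F *: io m y. Proof. by []. Qed.

Definition gens : seq Ntype := [seq Nbasis j | j <- enum 'I_n] ++
  flatten [seq [seq zz m y | y <- gsX m] | m <- E].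

Definition inSpan (x : Ntype) := exists c : 'I_(size gens) -> R, x = \sum_i c i *: gens`_i.

Lemma span0 : inSpan 0.
Proof. by exists (fun _ => 0); rewrite big1 // => i _; rewrite scale0r. Qed.
Lemma spanD x y : inSpan x -> inSpan y -> inSpan (x + y).
Proof.
move=> [c1 ->] [c2 ->]; exists (fun i => c1 i + c2 i).
by rewrite -big_split /=; apply: eq_bigr => i _; rewrite scalerDl.
Qed.
Lemma spanZ r x : inSpan x -> inSpan (r *: x).
Proof.
move=> [c ->]; exists (fun i => r * c i).
by rewrite scaler_sumr; apply: eq_bigr => i _; rewrite scalerA.
Qed.
Lemma span_sum (I : Type) (r : seq I) (P : pred I) (F : I -> Ntype) :
  (forall i, P i -> inSpan (F i)) -> inSpan (\sum_(i <- r | P i) F i).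
Proof. by move=> h; apply: (big_ind inSpan) => //; [exact: span0 | exact: spanD]. Qed.

Lemma span_mem g : g \in gens -> inSpan g.
Proof.
move=> gi; have gi' := gi; rewrite -index_mem in gi'.
pose p0 := Ordinal gi'.
exists (fun p => if p == p0 then 1 else 0).
rewrite (bigD1 p0) //= eqxx scale1r big1 ?addr0.
  by rewrite nth_index.
by move=> p /negbTE ->; rewrite scale0r.
Qed.

Lemma Nbasis_gens j : Nbasis j \in gens.
Proof. by rewrite mem_cat map_f ?mem_enum. Qed.

Lemma In_flatten (A : Type) (T : eqType) (f : A -> seq T) (l : seq A) a z :
  List.In a l -> z \in f a -> z \in flatten (map f l).
Proof.
elim: l => //= b l IH [<-|i] h; rewrite mem_cat ?h //.
by rewrite IH ?orbT.
Qed.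

Lemma zz_gens m (k : 'I_(size (gsX m))) : List.In m E -> zz m (gsX m)`_k \in gens.
Proof.
move=> i; rewrite mem_cat; apply/orP; right.
apply: (@In_flatten _ _ (fun m0 => [seq zz m0 y | y <- gsX m0]) E m _ i).
by apply: map_f; apply: mem_nth.
Qed.

Lemma N_fg : finitely_generated Ntype.
Proof.
exists gens => x.
pose J := fun r : R => inSpan (r *: x).
have Jid : is_ideal J.
  split; first by rewrite /J scale0r; exact: span0.
  - by move=> a b; rewrite /J scalerDl; apply: spanD.
  - by move=> r a ha; rewrite /J -scalerA; apply: spanZ.
have Jnz : exists r, r != 0 /\ J r.
  have [t [a [t0 e]]] := N_denom x; exists t; split => //; rewrite /J e.
  apply: span_sum => j _; apply: spanZ; apply: span_mem; exact: Nbasis_gens.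
have Jm : forall m : maxideal R, exists s, J s /\ ~ m s.
  move=> m; case: (pselect (List.In m E)) => [iE|niE].
  - have [y ey] := @Npred_inX m (val x) (valP x).
    have [c ec] := gsX_spec m y.
    have [sg [a [msg ea]]] := loc_common c.
    pose S := \prod_(k < size (gsX m)) ks m (gsX m)`_k.
    exists (sg * S); split; last first.
      by apply: mid_mul_not => //; apply: mid_prod => k _; exact: ks_not.
    rewrite /J; have -> : (sg * S) *: x =
        \sum_(k < size (gsX m)) (a k * \prod_(j < size (gsX m) | j != k) ks m (gsX m)`_j) *: zz m (gsX m)`_k.
      apply: val_inj; rewrite valNZ val_Nsum -ey ec io_sumF scaler_sumr.
      apply: eq_bigr => k _; rewrite valNZ val_zz io_Z !scalerA.
      congr (_ *: _).
      have := congr1 val (ea k); rewrite lvalM !val_loc => ek.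
      rewrite /S (bigD1 k) //= !tofracM -ek.
      change (sval (c k)) with (val (c k)); ring.
    apply: span_sum => k _; apply: spanZ; apply: span_mem; exact: zz_gens.
  - have fr := hE m niE.
    have [y ey] := @Npred_inX m (val x) (valP x).
    have [c ec] := rw_free fr y.
    have [sg [a [msg ea]]] := loc_common c.
    exists sg; split => //.
    rewrite /J; have -> : sg *: x = \sum_j a j *: Nbasis j.
      apply: val_inj; rewrite sum_Nbasis valNZ -ey ec io_sum.
      apply/rowP => j; rewrite !mxE.
      by have := congr1 val (ea j); rewrite lvalM !val_loc.
    apply: span_sum => j _; apply: spanZ; apply: span_mem; exact: Nbasis_gens.
have := hl_unit hR Jid Jnz Jm.
by rewrite /J scale1r.
Qed.

End Construction.

Unset Strict Implicit.

Unset Implicit Arguments.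

Theorem mainTheorem16 (R : idomainType) (hR : h_local R) (n : nat)
    (X : forall m : maxideal R, lmodType (localization m))
    (hX : forall m : maxideal R,
        [/\ finitely_generated (X m), torsion_free (X m) & has_rank (X m) n]) :
  (exists N : lmodType R,
      [/\ finitely_generated N, torsion_free N, has_rank N n &
          forall m : maxideal R, localization_iso m N (X m)])
  <->
  (exists L : seq (R -> Prop), forall m : maxideal R,
      (forall P, List.In P L -> ~ same_ideal m P) -> free_module (X m)).
Proof.
split.
- move=> [N [fgN tfN rkN iso]]; exact: (dir12 hR fgN tfN rkN iso).
- move=> [L hL].
  have [ms hms] := preds_to_max L.
  have hE : forall m, ~ List.In m ms -> free_module (X m).
    by move=> m nm; apply: hL => P PL sm; apply: nm; apply: hms; exists P.
  exists (Ntype X hX); split.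
  + exact: (N_fg hR X hX ms hE).
  + exact: (@N_tf R n X hX).
  + exact: (N_rank X hX).
  + by move=> m; exact: (N_iso hR X hX m).
Qed.
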